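(* Let $I\subset\mathbb{R}$ be an open interval, $s_0\in I$, and let $(\kappa_1,\kappa_2):I\to\mathbb{R}^2$ be continuous with an isolated zero at $s_0$, i.e. $(\kappa_1(s_0),\kappa_2(s_0))=(0,0)$ and $(\kappa_1(s),\kappa_2(s))\neq(0,0)$ for $s\neq s_0$ in $I$. Then the following are equivalent: (i) there exist a neighborhood $D\subset I$ of $s_0$ and continuous functions $\tilde r,\tilde\theta:D\to\mathbb{R}$ with $(\tilde r(s)\cos\tilde\theta(s),\,\tilde r(s)\sin\tilde\theta(s))=(\kappa_1(s),\kappa_2(s))$ for all $s\in D$; (ii) both $\theta^+$ and $\theta^-$ (defined in the context) exist and $\theta^+=\theta^-$.
   Context: Define $\hat\theta:\mathbb{R}^2\setminus\{(0,0)\}\to(-\tfrac{\pi}{2},\tfrac{\pi}{2}]$ by $\hat\theta(x,y)=\tan^{-1}(y/x)$ if $x\neq0$ and $\hat\theta(0,y)=\tfrac{\pi}{2}$ for $y\neq 0$ (so $\hat\theta$ is the angle of the line through the origin and $(x,y)$, taken in $(-\pi/2,\pi/2]$). Let $R(x,y)=\big(\tfrac{\sqrt2}{2}(x-y),\,\tfrac{\sqrt2}{2}(x+y)\big)$ be rotation by $\pi/4$. Set $\hat\theta^+:=\lim_{s\to s_0^+}\hat\theta(\kappa_1(s),\kappa_2(s))$ and $\hat\theta^+_{\pi/2}:=\lim_{s\to s_0^+}\hat\theta\big(R(\kappa_1(s),\kappa_2(s))\big)$ (these limits may fail to exist). Define $\theta^+:=\hat\theta^+$ if $\hat\theta^+$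 exists and $-\tfrac{\pi}{2}<\hat\theta^+<\tfrac{\pi}{2}$; $\theta^+:=\tfrac{\pi}{2}$ if $\hat\theta^+_{\pi/2}$ exists and equals $-\tfrac{\pi}{4}$; and $\theta^+$ is undefined otherwise. Define $\hat\theta^-$, $\hat\theta^-_{\pi/2}$, $\theta^-$ in the same way with $s\to s_0^-$ in place of $s\to s_0^+$. *)

(* Defs.v *)
From Stdlib Require Import Reals Lra.
Open Scope R_scope.

(* angle of the line through the origin and (x,y), in (-PI/2, PI/2] *)
Definition theta_hat (x y : R) : R :=
  if Req_EM_T x 0 then PI / 2 else atan (y / x).

Definition rot1 (x y : R) : R := sqrt 2 / 2 * (x - y).
Definition rot2 (x y : R) : R := sqrt 2 / 2 * (x + y).

Definition right_lim (f : R -> R) (s0 L : R) : Prop :=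
  forall eps, 0 < eps -> exists delta, 0 < delta /\
    forall s, s0 < s < s0 + delta -> Rabs (f s - L) < eps.
Definition left_lim (f : R -> R) (s0 L : R) : Prop :=
  forall eps, 0 < eps -> exists delta, 0 < delta /\
    forall s, s0 - delta < s < s0 -> Rabs (f s - L) < eps.

Definition theta_plus (k1 k2 : R -> R) (s0 t : R) : Prop :=
  (right_lim (fun s => theta_hat (k1 s) (k2 s)) s0 t /\ - (PI / 2) < t < PI / 2)
  \/ (right_lim (fun s => theta_hat (rot1 (k1 s) (k2 s)) (rot2 (k1 s) (k2 s))) s0 (- (PI / 4))
      /\ t = PI / 2).
Definition theta_minus (k1 k2 : R -> R) (s0 t : R) : Prop :=
  (left_lim (fun s => theta_hat (k1 s) (k2 s)) s0 t /\ - (PI / 2) < t < PI / 2)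
  \/ (left_lim (fun s => theta_hat (rot1 (k1 s) (k2 s)) (rot2 (k1 s) (k2 s))) s0 (- (PI / 4))
      /\ t = PI / 2).

Definition is_open_interval (I : R -> Prop) : Prop :=
  (forall x, I x -> exists e, 0 < e /\ forall y, Rabs (y - x) < e -> I y) /\
  (forall x y z, I x -> I z -> x <= y <= z -> I y) /\
  (exists x, I x).

Definition continuous_on (D : R -> Prop) (f : R -> R) : Prop :=
  forall s, D s -> forall eps, 0 < eps -> exists delta, 0 < delta /\
    forall t, D t -> Rabs (t - s) < delta -> Rabs (f t - f s) < eps.

(* Main.v *)
Require Import Defs.
From Stdlib Require Import Reals Lra.
Open Scope R_scope.

Definition cpt (f : R -> R) (x : R) : Prop :=
  forall eps, 0 < eps -> exists d, 0 < d /\ forall y, Rabs (y - x) < d -> Rabs (f y - f x) < eps.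

Lemma cpt_iff f x : continuity_pt f x <-> cpt f x.
Proof.
  unfold continuity_pt, continue_in, limit1_in, limit_in, D_x, no_cond, cpt; simpl;
  unfold R_dist; split.
  - intros H eps Heps. destruct (H eps Heps) as [d [Hd H2]]. exists d; split; auto.
    intros y Hy. destruct (Req_dec x y) as [<-|Hne].
    + unfold Rminus; rewrite Rplus_opp_r, Rabs_R0; lra.
    + apply H2; auto.
  - intros H eps Heps. destruct (H eps Heps) as [d [Hd H2]]. exists d; split; auto.
    intros y [_ Hy]; apply H2; auto.
Qed.

Lemma cpt_local f g x e : 0 < e -> (forall y, Rabs (y - x) < e -> f y = g y) ->
  cpt g x -> cpt f x.
Proof.
  intros He Hfg H eps Heps. destruct (H eps Heps) as [d [Hd H2]].
  exists (Rmin d e); split. apply Rmin_pos; auto.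
  intros y Hy. rewrite (Hfg y), (Hfg x).
  apply H2. pose proof (Rmin_l d e); lra.
  unfold Rminus; rewrite Rplus_opp_r, Rabs_R0; auto.
  pose proof (Rmin_r d e); lra.
Qed.

Lemma cpt_of_on D f x e : continuous_on D f -> 0 < e ->
  (forall y, Rabs (y - x) < e -> D y) -> cpt f x.
Proof.
  intros Hc He HD eps Heps.
  assert (Dx : D x) by (apply HD; unfold Rminus; rewrite Rplus_opp_r, Rabs_R0; auto).
  destruct (Hc x Dx eps Heps) as [d [Hd H2]].
  exists (Rmin d e); split. apply Rmin_pos; auto.
  intros y Hy. apply H2. apply HD. pose proof (Rmin_r d e); lra.
  pose proof (Rmin_l d e); lra.
Qed.

Lemma on_of_cpt D f : (forall x, D x -> cpt f x) -> continuous_on D f.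
Proof.
  intros H x Dx eps Heps. destruct (H x Dx eps Heps) as [d [Hd H2]].
  exists d; split; auto.
Qed.

Lemma ball_sub x e y : Rabs (y - x) < e -> exists e', 0 < e' /\
  forall z, Rabs (z - y) < e' -> Rabs (z - x) < e.
Proof.
  intros H. exists (e - Rabs (y - x)). split. lra.
  intros z Hz. assert (Rabs (z - x) <= Rabs (z - y) + Rabs (y - x)).
  { replace (z - x) with ((z - y) + (y - x)) by ring. apply Rabs_triang. }
  lra.
Qed.

Lemma L1 (J : R -> Prop) (s0 t : R) (a b : R -> R) :
  is_open_interval J -> J s0 ->
  (forall s, J s -> continuity_pt a s) -> (forall s, J s -> continuity_pt b s) ->
  a s0 = 0 -> b s0 = 0 -> - (PI/2) < t < PI/2 ->
  (forall eps, 0 < eps -> exists d, 0 < d /\ forall s, s <> s0 -> Rabs (s - s0) < d ->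
    Rabs (theta_hat (a s) (b s) - t) < eps) ->
  exists e th, 0 < e /\ (forall s, Rabs (s - s0) < e -> J s) /\
    continuous_on (fun s => Rabs (s - s0) < e) th /\
    forall s, Rabs (s - s0) < e -> a s * sin (th s) = b s * cos (th s).
Proof.
  intros [HJo _] Js0 Ca Cb a0 b0 Ht Hlim.
  set (m := Rmin (PI/2 - t) (t + PI/2)).
  assert (Hm : 0 < m) by (unfold m; apply Rmin_pos; lra).
  assert (m2 : m <= PI/2 - t) by apply Rmin_l.
  destruct (Hlim m Hm) as [d0 [Hd0 Hd0']].
  destruct (HJo s0 Js0) as [e0 [He0 He0']].
  set (e := Rmin d0 e0).
  assert (He : 0 < e) by (apply Rmin_pos; auto).
  assert (HeJ : forall s, Rabs (s - s0) < e -> J s).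
  { intros s Hs. apply He0'. pose proof (Rmin_r d0 e0); unfold e in Hs; lra. }
  assert (Ha : forall s, Rabs (s - s0) < e -> s <> s0 -> a s <> 0).
  { intros s Hs Hne E. assert (Rabs (s - s0) < d0) by (pose proof (Rmin_l d0 e0); unfold e in Hs; lra).
    specialize (Hd0' s Hne H). unfold theta_hat in Hd0'.
    destruct (Req_EM_T (a s) 0); [|contradiction].
    rewrite Rabs_right in Hd0'; lra. }
  set (th := fun s => if Req_EM_T s s0 then t else theta_hat (a s) (b s)).
  assert (Hth : forall s, s <> s0 -> Rabs (s - s0) < e -> th s = atan (b s / a s)).
  { intros s Hne Hs. unfold th, theta_hat. destruct (Req_EM_T s s0); [contradiction|].
    destruct (Req_EM_T (a s) 0) as [E|]; [exfalso; exact (Ha s Hs Hne E)|reflexivity]. }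
  exists e, th. split; [auto|]. split; [auto|]. split.
  - apply on_of_cpt. intros x Hx. destruct (Req_dec x s0) as [->|Hne].
    + intros eps Heps. destruct (Hlim eps Heps) as [d [Hd Hd']].
      exists d; split; auto. intros y Hy. unfold th.
      destruct (Req_EM_T s0 s0) as [_|C]; [|congruence].
      destruct (Req_EM_T y s0) as [->|Hy0].
      * unfold Rminus; rewrite Rplus_opp_r, Rabs_R0; auto.
      * apply Hd'; auto.
    + destruct (ball_sub s0 e x Hx) as [e1 [He1 He1']].
      assert (Hx0 : 0 < Rabs (x - s0)) by (apply Rabs_pos_lt; lra).
      apply cpt_local with (g := comp atan (b / a)%F) (e := Rmin e1 (Rabs (x - s0))).
      * apply Rmin_pos; auto.
      * intros y Hy. assert (Rabs (y - x) < e1) by (pose proof (Rmin_l e1 (Rabs (x - s0))); lra).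
        assert (Rabs (y - x) < Rabs (x - s0)) by (pose proof (Rmin_r e1 (Rabs (x - s0))); lra).
        assert (y <> s0).
        { intro E; subst y. rewrite Rabs_minus_sym in H0. lra. }
        rewrite Hth; auto.
      * apply cpt_iff. apply continuity_pt_comp.
        -- apply continuity_pt_div; auto.
        -- apply derivable_continuous_pt, derivable_pt_atan.
  - intros s Hs. destruct (Req_dec s s0) as [->|Hne].
    + rewrite a0, b0; ring.
    + rewrite Hth; auto. pose proof (atan_bound (b s / a s)) as Hab.
      assert (Hc : 0 < cos (atan (b s / a s))) by (apply cos_gt_0; lra).
      pose proof (tan_atan (b s / a s)) as T. unfold tan in T.
      assert (Es : sin (atan (b s / a s)) = b s / a s * cos (atan (b s / a s))).
      { rewrite <- T at 2. field. lra. }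
      rewrite Es. field. apply Ha; auto.
Qed.

Lemma P_pt phi r : - (PI/2) < phi < PI/2 -> r <> 0 ->
  theta_hat (r * cos phi) (r * sin phi) = phi.
Proof.
  intros [H1 H2] Hr. pose proof (cos_gt_0 phi H1 H2) as Hc.
  unfold theta_hat. destruct (Req_EM_T (r * cos phi) 0) as [E|E].
  - apply Rmult_integral in E; lra.
  - replace (r * sin phi / (r * cos phi)) with (tan phi).
    apply atan_tan; lra. unfold tan; field; lra.
Qed.

Lemma G_lim (e : R) (s0 y : R) (a b r th : R -> R) :
  0 < e ->
  (forall s, Rabs (s - s0) < e -> a s = r s * cos (th s) /\ b s = r s * sin (th s)) ->
  (forall s, Rabs (s - s0) < e -> s <> s0 -> ~ (a s = 0 /\ b s = 0)) ->
  (forall eps, 0 < eps -> exists d, 0 < d /\ forall s, Rabs (s - s0) < d -> Rabs (th s - th s0) < eps) ->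
  sin y = 0 ->
  - (PI/2) < th s0 - y < PI/2 ->
  forall eps, 0 < eps -> exists d, 0 < d /\ forall s, s <> s0 -> Rabs (s - s0) < d ->
    Rabs (theta_hat (a s) (b s) - (th s0 - y)) < eps.
Proof.
  intros He Hpol Hnz Hc Hy Hb eps Heps.
  set (m := Rmin eps (Rmin (PI/2 - (th s0 - y)) (th s0 - y + PI/2))).
  assert (Hm : 0 < m) by (unfold m; repeat apply Rmin_pos; lra).
  assert (m1 : m <= eps) by apply Rmin_l.
  assert (m2 : m <= PI/2 - (th s0 - y)) by (unfold m; eapply Rle_trans; [apply Rmin_r|apply Rmin_l]).
  assert (m3 : m <= th s0 - y + PI/2) by (unfold m; eapply Rle_trans; [apply Rmin_r|apply Rmin_r]).
  destruct (Hc m Hm) as [d [Hd Hd2]].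
  exists (Rmin d e); split. apply Rmin_pos; auto.
  intros s Hs Hsd.
  assert (Hsd1 : Rabs (s - s0) < d) by (pose proof (Rmin_l d e); lra).
  assert (Hse : Rabs (s - s0) < e) by (pose proof (Rmin_r d e); lra).
  specialize (Hd2 s Hsd1). destruct (Hpol s Hse) as [Ha Hb2].
  assert (Hcy : cos y <> 0).
  { intro E. pose proof (sin2_cos2 y) as Q. rewrite E, Hy in Q. unfold Rsqr in Q. lra. }
  assert (Ea : a s = (r s * cos y) * cos (th s - y)).
  { rewrite Ha. replace (cos (th s)) with (cos ((th s - y) + y)) by (f_equal; ring).
    rewrite cos_plus, Hy. ring. }
  assert (Eb : b s = (r s * cos y) * sin (th s - y)).
  { rewrite Hb2. replace (sin (th s)) with (sin ((th s - y) + y)) by (f_equal; ring).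
    rewrite sin_plus, Hy. ring. }
  rewrite Ea, Eb. rewrite P_pt.
  - replace (th s - y - (th s0 - y)) with (th s - th s0) by ring. lra.
  - apply Rabs_def2 in Hd2. lra.
  - intro E. apply (Hnz s Hse Hs). rewrite Ea, Eb, E. split; ring.
Qed.

Definition two_lim (f : R -> R) (s0 L : R) : Prop :=
  forall eps, 0 < eps -> exists d, 0 < d /\ forall s, s <> s0 -> Rabs (s - s0) < d ->
    Rabs (f s - L) < eps.

Lemma two_lim_iff f s0 L : two_lim f s0 L <-> right_lim f s0 L /\ left_lim f s0 L.
Proof.
  split.
  - intros H. split; intros eps Heps; destruct (H eps Heps) as [d [Hd H2]];
    exists d; split; auto; intros s Hs; apply H2; try lra; apply Rabs_def1; lra.
  - intros [H1 H2] eps Heps. destruct (H1 eps Heps) as [d1 [Hd1 H1']].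
    destruct (H2 eps Heps) as [d2 [Hd2 H2']].
    exists (Rmin d1 d2); split. apply Rmin_pos; auto.
    intros s Hne Hs. pose proof (Rmin_l d1 d2). pose proof (Rmin_r d1 d2).
    apply Rabs_def2 in Hs. destruct (Rlt_or_le s s0).
    + apply H2'; lra.
    + apply H1'. assert (s <> s0) by auto. lra.
Qed.

Lemma polar_from x y th : x * sin th = y * cos th ->
  (x * cos th + y * sin th) * cos th = x /\ (x * cos th + y * sin th) * sin th = y.
Proof.
  intros E. pose proof (sin2_cos2 th) as Q. unfold Rsqr in Q. split.
  - replace x with (x * (sin th * sin th + cos th * cos th)) at 2 by (rewrite Q; ring).
    replace (x * (sin th * sin th + cos th * cos th)) with ((x * sin th) * sin th + x * cos th * cos th) by ring.
    rewrite E; ring.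
  - replace y with (y * (sin th * sin th + cos th * cos th)) at 2 by (rewrite Q; ring).
    replace ((x * cos th + y * sin th) * sin th) with ((x * sin th) * cos th + y * sin th * sin th) by ring.
    rewrite E; ring.
Qed.

Lemma c_eq : 1 / sqrt 2 = sqrt 2 / 2.
Proof.
  pose proof (sqrt_sqrt 2 ltac:(lra)). assert (sqrt 2 <> 0) by (intro E; rewrite E in H; lra).
  replace (sqrt 2 / 2) with (sqrt 2 / (sqrt 2 * sqrt 2)) by (rewrite H; reflexivity). field; auto.
Qed.

Lemma c_pos : 0 < sqrt 2 / 2.
Proof. pose proof (sqrt_lt_R0 2 ltac:(lra)). lra. Qed.

Lemma rot_sin x y th : rot1 x y * sin th = rot2 x y * cos th ->
  x * sin (th - PI/4) = y * cos (th - PI/4).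
Proof.
  unfold rot1, rot2. rewrite sin_minus, cos_minus, cos_PI4, sin_PI4, c_eq. intro E. lra.
Qed.

Lemma rot_polar x y r th : x = r * cos th -> y = r * sin th ->
  rot1 x y = r * cos (th + PI/4) /\ rot2 x y = r * sin (th + PI/4).
Proof.
  intros -> ->. unfold rot1, rot2. rewrite sin_plus, cos_plus, cos_PI4, sin_PI4, c_eq. split; ring.
Qed.

Lemma rot_nz x y : ~ (x = 0 /\ y = 0) -> ~ (rot1 x y = 0 /\ rot2 x y = 0).
Proof.
  unfold rot1, rot2. intros H [E1 E2]. pose proof c_pos.
  apply Rmult_integral in E1. apply Rmult_integral in E2. apply H. lra.
Qed.

Lemma cont_J (J : R -> Prop) f s : is_open_interval J -> continuous_on J f -> J s -> continuity_pt f s.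
Proof.
  intros [HJo _] Hc Js. destruct (HJo s Js) as [e [He He']].
  apply cpt_iff. apply (cpt_of_on J f s e); auto.
Qed.

Lemma cont_ball e s0 f x : continuous_on (fun s => Rabs (s - s0) < e) f -> Rabs (x - s0) < e ->
  continuity_pt f x.
Proof.
  intros Hc Hx. destruct (ball_sub s0 e x Hx) as [e1 [He1 He1']].
  apply cpt_iff. apply (cpt_of_on (fun s => Rabs (s - s0) < e) f x e1); auto.
Qed.

Lemma build (J : R -> Prop) (s0 : R) (k1 k2 th : R -> R) e :
  is_open_interval J -> continuous_on J k1 -> continuous_on J k2 -> 0 < e ->
  (forall s, Rabs (s - s0) < e -> J s) ->
  continuous_on (fun s => Rabs (s - s0) < e) th ->
  (forall s, Rabs (s - s0) < e -> k1 s * sin (th s) = k2 s * cos (th s)) ->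
  (exists (D : R -> Prop) (r th : R -> R),
      (forall s, D s -> J s) /\
      (exists e, 0 < e /\ forall s, Rabs (s - s0) < e -> D s) /\
      continuous_on D r /\ continuous_on D th /\
      (forall s, D s -> r s * cos (th s) = k1 s /\ r s * sin (th s) = k2 s)).
Proof.
  intros HJ C1 C2 He HeJ Cth E.
  exists (fun s => Rabs (s - s0) < e), (fun s => k1 s * cos (th s) + k2 s * sin (th s)), th.
  split; auto. split. exists e; split; auto. split; [|split; auto].
  - apply on_of_cpt. intros x Hx. apply cpt_iff.
    assert (Hk1 := cont_J J k1 x HJ C1 (HeJ x Hx)).
    assert (Hk2 := cont_J J k2 x HJ C2 (HeJ x Hx)).
    assert (Ht := cont_ball e s0 th x Cth Hx).
    assert (continuity_pt (k1 * comp cos th + k2 * comp sin th)%F x).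
    { apply continuity_pt_plus; apply continuity_pt_mult; auto;
      apply continuity_pt_comp; auto; [apply continuity_cos|apply continuity_sin]. }
    exact H.
  - intros s Hs. apply polar_from. auto.
Qed.

Theorem lemma1 (J : R -> Prop) (s0 : R) (k1 k2 : R -> R) :
  is_open_interval J -> J s0 ->
  continuous_on J k1 -> continuous_on J k2 ->
  k1 s0 = 0 -> k2 s0 = 0 ->
  (forall s, J s -> s <> s0 -> ~ (k1 s = 0 /\ k2 s = 0)) ->
  ((exists (D : R -> Prop) (r th : R -> R),
      (forall s, D s -> J s) /\
      (exists e, 0 < e /\ forall s, Rabs (s - s0) < e -> D s) /\
      continuous_on D r /\ continuous_on D th /\
      (forall s, D s -> r s * cos (th s) = k1 s /\ r s * sin (th s) = k2 s))
   <->
   (exists t, theta_plus k1 k2 s0 t /\ theta_minus k1 k2 s0 t)).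
Proof.
  intros HJ Js0 C1 C2 z1 z2 Hnz. pose proof PI_RGT_0 as HPI. split.
  - intros [D [r [th [HDJ [[e [He HeD]] [Cr [Cth Hpol]]]]]]].
    set (al := th s0).
    set (n := (- up (- (al + PI/2) / PI))%Z).
    set (y := IZR n * PI).
    assert (Hy : sin y = 0) by (apply sin_eq_0_1; exists n; reflexivity).
    assert (Hb : - (PI/2) < al - y <= PI/2).
    { unfold y, n. rewrite opp_IZR. destruct (archimed (- (al + PI / 2) / PI)) as [A1 A2].
      set (u := IZR (up (- (al + PI / 2) / PI))) in *.
      set (q := - (al + PI / 2) / PI) in *.
      assert (Eq : q * PI = - (al + PI/2)) by (unfold q; field; lra).
      assert (B1 : - (al + PI/2) < u * PI) by nra.
      assert (B2 : u * PI - - (al + PI/2) <= PI) by nra.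
      split; nra. }
    assert (Cth0 : forall eps, 0 < eps -> exists d, 0 < d /\ forall s, Rabs (s - s0) < d -> Rabs (th s - th s0) < eps).
    { intros eps Heps.
      assert (D0 : D s0) by (apply HeD; unfold Rminus; rewrite Rplus_opp_r, Rabs_R0; auto).
      destruct (Cth s0 D0 eps Heps) as [d [Hd Hd']]. exists (Rmin d e); split. apply Rmin_pos; auto.
      intros s Hs. apply Hd'. apply HeD. pose proof (Rmin_r d e); lra. pose proof (Rmin_l d e); lra. }
    assert (Hnz' : forall s, Rabs (s - s0) < e -> s <> s0 -> ~ (k1 s = 0 /\ k2 s = 0)).
    { intros s Hs Hne. apply Hnz; auto. }
    destruct (Rlt_or_le (al - y) (PI/2)) as [Hlt|Hge].
    + exists (al - y).
      assert (L : two_lim (fun s => theta_hat (k1 s) (k2 s)) s0 (al - y)).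
      { intros eps Heps. apply (G_lim e s0 y k1 k2 r th); auto.
        - intros s Hs. destruct (Hpol s (HeD s Hs)); auto.
        - fold al. lra. }
      apply two_lim_iff in L. destruct L as [L1 L2].
      split; left; split; auto; lra.
    + exists (PI/2).
      assert (L : two_lim (fun s => theta_hat (rot1 (k1 s) (k2 s)) (rot2 (k1 s) (k2 s))) s0 (- (PI/4))).
      { intros eps Heps.
        replace (- (PI/4)) with ((fun s => th s + PI/4) s0 - (y + PI)) by (unfold al in *; simpl; lra).
        apply (G_lim e s0 (y + PI) _ _ r (fun s => th s + PI/4)); auto.
        - intros s Hs. destruct (Hpol s (HeD s Hs)) as [P1 P2].
          apply rot_polar; auto.
        - intros s Hs Hne. apply rot_nz. auto.
        - intros eps0 Heps0. destruct (Cth0 eps0 Heps0) as [d [Hd Hd']]. exists d; split; auto.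
          intros s Hs. replace (th s + PI/4 - (th s0 + PI/4)) with (th s - th s0) by ring. auto.
        - rewrite neg_sin, Hy; ring.
        - fold al. lra. }
      apply two_lim_iff in L. destruct L as [L1 L2].
      split; right; split; auto.
  - intros [t [Hp Hm]].
    destruct Hp as [[Hp Ht]|[Hp Ht]].
    + destruct Hm as [[Hm _]|[_ Ht']]; [|lra].
      assert (L : two_lim (fun s => theta_hat (k1 s) (k2 s)) s0 t) by (apply two_lim_iff; auto).
      destruct (L1 J s0 t k1 k2 HJ Js0) as [e [th [He [HeJ [Cth E]]]]]; auto.
      * intros s Js. apply (cont_J J); auto.
      * intros s Js. apply (cont_J J); auto.
      * apply (build J s0 k1 k2 th e); auto.
    + destruct Hm as [[_ Ht']|[Hm _]]; [lra|].
      assert (L : two_lim (fun s => theta_hat (rot1 (k1 s) (k2 s)) (rot2 (k1 s) (k2 s))) s0 (- (PI/4)))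
        by (apply two_lim_iff; auto).
      destruct (L1 J s0 (- (PI/4)) (fun s => rot1 (k1 s) (k2 s)) (fun s => rot2 (k1 s) (k2 s)) HJ Js0)
        as [e [th [He [HeJ [Cth E]]]]]; auto.
      * intros s Js. assert (H1 := cont_J J k1 s HJ C1 Js). assert (H2 := cont_J J k2 s HJ C2 Js).
        assert (continuity_pt (fct_cte (sqrt 2 / 2) * (k1 - k2))%F s).
        { apply continuity_pt_mult. apply continuity_pt_const; intros u v; reflexivity.
          apply continuity_pt_minus; auto. }
        exact H.
      * intros s Js. assert (H1 := cont_J J k1 s HJ C1 Js). assert (H2 := cont_J J k2 s HJ C2 Js).
        assert (continuity_pt (fct_cte (sqrt 2 / 2) * (k1 + k2))%F s).
        { apply continuity_pt_mult. apply continuity_pt_const; intros u v; reflexivity.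
          apply continuity_pt_plus; auto. }
        exact H.
      * unfold rot1; rewrite z1, z2; ring.
      * unfold rot2; rewrite z1, z2; ring.
      * lra.
      * apply (build J s0 k1 k2 (fun s => th s - PI/4) e); auto.
        -- apply on_of_cpt. intros x Hx. apply cpt_iff.
           assert (continuity_pt (th - fct_cte (PI/4))%F x).
           { apply continuity_pt_minus. apply (cont_ball e s0); auto.
             apply continuity_pt_const; intros u v; reflexivity. }
           exact H.
        -- intros s Hs. apply rot_sin. auto.
Qed.
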